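(* For every activity-breaking channel $\mathcal P$ on $S$, the inclusion $\mathcal P(\mathsf P(S))\subseteq\mathsf P(S)$ is strict; that is, there is no activity-breaking channel with $\mathcal P(\mathsf P(S))=\mathsf P(S)$. In particular no activity-breaking channel satisfies $\mathcal P(\tau)=\tau$ for all $\tau\in\mathsf P(S)$.
   Context: $S$ is a $d$-dimensional quantum system ($d\ge2$) with non-degenerate Hamiltonian $H=\sum_i E_i|i\rangle\langle i|$, $E_1<\dots<E_d$. $\mathsf{St}(S)$ is the set of density matrices; $\mathsf P(S)$ is the set of passive states, i.e. states $\sum_ip_i|i\rangle\langle i|$ with $p_1\ge\dots\ge p_d$. A quantum channel $\mathcal P$ is activity breaking if $\mathcal P(\rho)\in\mathsf P(S)$ for every $\rho\in\mathsf{St}(S)$. *)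

(* Defs.v *)
From HB Require Import structures.
From mathcomp Require Import all_boot all_order all_algebra.
Set Implicit Arguments. Unset Strict Implicit. Unset Printing Implicit Defensive.
Import Order.TTheory GRing.Theory Num.Theory.
Local Open Scope ring_scope.

Section Quantum.
Variables (C : numClosedFieldType) (d : nat).

Definition adj (A : 'M[C]_d) : 'M[C]_d := (map_mx Num.conj A)^T.

Definition psd (A : 'M[C]_d) : Prop :=
  forall v : 'cV[C]_d, 0 <= ((map_mx Num.conj v)^T *m A *m v) 0 0.

Definition is_state (rho : 'M[C]_d) : Prop := psd rho /\ \tr rho = 1.

Definition hamiltonian (E : 'I_d -> C) : 'M[C]_d := diag_mx (\row_i E i).

Definition is_passive (E : 'I_d -> C) (rho : 'M[C]_d) : Prop :=
  is_state rho /\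
  (forall i j : 'I_d, i != j -> rho i j = 0) /\
  (forall i j : 'I_d, E i < E j -> rho j j <= rho i i).

(* quantum channel = CPTP map, given in Kraus form *)
Definition is_channel (P : 'M[C]_d -> 'M[C]_d) : Prop :=
  exists (n : nat) (K : 'I_n -> 'M[C]_d),
    \sum_(k < n) adj (K k) *m K k = 1%:M /\
    forall rho : 'M[C]_d, P rho = \sum_(k < n) K k *m rho *m adj (K k).

Definition activity_breaking (E : 'I_d -> C) (P : 'M[C]_d -> 'M[C]_d) : Prop :=
  is_channel P /\ forall rho, is_state rho -> is_passive E (P rho).

End Quantum.

(* Main.v *)
Require Import Defs.
From mathcomp Require Import all_boot all_order all_algebra.
Import Order.TTheory GRing.Theory Num.Theory.
Local Open Scope ring_scope.

Lemma conj_delta (C : numClosedFieldType) d (i : 'I_d) :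
  (map_mx Num.conj (delta_mx i 0 : 'cV[C]_d))^T = delta_mx 0 i.
Proof.
apply/matrixP=> a b; rewrite !mxE.
by rewrite andbC; case: (_ && _); rewrite ?conjC1 ?conjC0.
Qed.

Lemma psd_diag (C : numClosedFieldType) d (rho : 'M[C]_d) i :
  psd rho -> 0 <= rho i i.
Proof.
move/(_ (delta_mx i 0)); rewrite conj_delta -rowE -colE !mxE.
by [].
Qed.

Lemma psd_delta (C : numClosedFieldType) d (k : 'I_d) :
  psd (delta_mx k k : 'M[C]_d).
Proof.
move=> v; rewrite -(@mul_delta_mx C d 1 d 0 k k) !mulmxA -colE -mulmxA -rowE.
rewrite !mxE big_ord1 !mxE mulrC; exact: mul_conjC_ge0.
Qed.

Lemma psd_scalar (C : numClosedFieldType) d (c : C) :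
  0 <= c -> psd (c%:M : 'M[C]_d).
Proof.
move=> c0 v; rewrite mul_mx_scalar -scalemxAl !mxE.
apply: mulr_ge0 => //; apply: sumr_ge0 => i _; rewrite !mxE mulrC.
exact: mul_conjC_ge0.
Qed.

Lemma tr_delta (C : numClosedFieldType) d (k : 'I_d) :
  \tr (delta_mx k k : 'M[C]_d) = 1.
Proof.
rewrite /mxtrace (bigD1 k) //= big1 ?addr0; first by rewrite mxE !eqxx.
by move=> i /negbTE ik; rewrite mxE ik.
Qed.

Lemma channel_lin (C : numClosedFieldType) d (P : 'M[C]_d -> 'M[C]_d)
  (a : 'I_d -> C) (M : 'I_d -> 'M[C]_d) :
  is_channel P -> P (\sum_k a k *: M k) = \sum_k a k *: P (M k).
Proof.
case=> n [K [_ HP]]; rewrite HP.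
under eq_bigr do rewrite mulmx_sumr mulmx_suml.
rewrite exchange_big /=; apply: eq_bigr => k _.
rewrite HP scaler_sumr; apply: eq_bigr => l _.
by rewrite -scalemxAr !scalemxAl.
Qed.

Lemma pass_facts (C : numClosedFieldType) d (E : 'I_d -> C)
  (hE : forall i j : 'I_d, (i < j)%N -> E i < E j) (i0 : 'I_d) (h0 : val i0 = 0%N)
  (rho : 'M[C]_d) : is_passive E rho ->
  [/\ forall k, 0 <= rho k k, \sum_k rho k k = 1,
      d%:R^-1 <= rho i0 i0 & rho i0 i0 <= 1].
Proof.
case=> [[hpsd htr] [_ hmon]].
have hge k : 0 <= rho k k by exact: psd_diag.
have hs : \sum_k rho k k = 1 by rewrite -htr.
have hd : (0 < d)%N by rewrite -h0 (ltn_ord i0).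
split=> //.
- rewrite -[d%:R^-1]mul1r ler_pdivrMr ?ltr0n // -[X in X <= _]hs.
  have -> : rho i0 i0 * d%:R = \sum_(k < d) rho i0 i0.
    by rewrite sumr_const card_ord mulr_natr.
  apply: ler_sum => k _; case: (eqVneq k i0) => [->//|ne].
  apply: hmon; apply: hE; rewrite h0 lt0n; apply: contra ne => /eqP hk.
  by apply/eqP/val_inj; rewrite /= hk h0.
- by rewrite -hs (bigD1 i0) //= lerDl sumr_ge0.
Qed.

Theorem mainTheorem17 (C : numClosedFieldType) (d : nat) (hd : (2 <= d)%N)
  (E : 'I_d -> C) (hE : forall i j : 'I_d, (i < j)%N -> E i < E j)
  (P : 'M[C]_d -> 'M[C]_d) (hP : activity_breaking E P) :
  (exists sigma, is_passive E sigma /\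
     ~ (exists tau, is_passive E tau /\ P tau = sigma)) /\
  (exists tau, is_passive E tau /\ P tau <> tau).
Proof.
have hd0 : (0 < d)%N by apply: leq_trans hd.
pose i0 : 'I_d := Ordinal hd0.
have h0 : val i0 = 0%N by [].
case: hP => hch hpas.
pose a k := (P (delta_mx k k)) i0 i0.
have delta_state k : is_state (delta_mx k k : 'M[C]_d).
  by split; [exact: psd_delta | exact: tr_delta].
have ha k : d%:R^-1 <= a k /\ a k <= 1.
  by case: (@pass_facts _ _ _ hE _ h0 _ (hpas _ (delta_state k))).
have key tau : is_passive E tau -> (P tau) i0 i0 = \sum_k tau k k * a k.
  case=> _ [hoff _].
  have etau : tau = \sum_k tau k k *: delta_mx k k.
    have -> : \sum_k tau k k *: delta_mx k k = diag_mx (\row_k tau k k).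
      by rewrite diag_mx_sum_delta; apply: eq_bigr => k _; rewrite mxE.
    apply/matrixP=> i j; rewrite !mxE; case: (eqVneq i j) => [->|ne].
      by rewrite mulr1n.
    by rewrite hoff // mulr0n.
  rewrite {1}etau channel_lin // summxE; apply: eq_bigr => k _.
  by rewrite mxE.
have dinv0 : 0 < d%:R^-1 :> C by rewrite invr_gt0 ltr0n.
have tpos tau : is_passive E tau -> tau i0 i0 != 0.
  move=> /(@pass_facts _ _ _ hE _ h0 _) [_ _ h _].
  by rewrite gt_eqF // (lt_le_trans dinv0 h).
have tge tau : is_passive E tau -> forall k, 0 <= tau k k.
  by move=> /(@pass_facts _ _ _ hE _ h0 _) [].
have tsum tau : is_passive E tau -> \sum_k tau k k = 1.
  by move=> /(@pass_facts _ _ _ hE _ h0 _) [].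
have [sigma [hs hn]] : exists sigma, is_passive E sigma /\
     ~ (exists tau, is_passive E tau /\ P tau = sigma).
  case: (eqVneq (a i0) 1) => ha0.
  - exists (d%:R^-1%:M); split.
      split; first split.
      + by apply: psd_scalar; rewrite ltW.
      + by rewrite mxtrace_scalar -(mulr_natr (d%:R^-1)) mulVf // pnatr_eq0 -lt0n.
      split.
      + by move=> i j ij; rewrite mxE (negbTE ij) mulr0n.
      + by move=> i j _; rewrite !mxE !eqxx.
    case=> tau [ht hPt].
    have h1 : \sum_k tau k k * (a k - d%:R^-1) = 0.
      under eq_bigr do rewrite mulrBr.
      rewrite sumrB -key // hPt -mulr_suml tsum // mul1r mxE eqxx mulr1n.
      by rewrite subrr.
    have h3 : tau i0 i0 * (a i0 - d%:R^-1) = 0.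
      apply: (psumr_eq0P _ h1) => // k _; apply: mulr_ge0; first exact: tge.
      by rewrite subr_ge0; case: (ha k).
    move: h3 => /eqP; rewrite mulf_eq0 (negbTE (tpos _ ht)) /= subr_eq0 ha0.
    rewrite eq_sym invr_eq1 pnatr_eq1 => /eqP hd1.
    by rewrite hd1 in hd.
  - exists (delta_mx i0 i0); split.
      split; first exact: delta_state.
      split.
      + move=> i j ij; rewrite mxE; case: (eqVneq i i0) => [ei|] //=.
        case: (eqVneq j i0) => [ej|] //=.
        by move: ij; rewrite ei ej eqxx.
      + move=> i j hij.
        have hj : j != i0.
          apply/eqP => ej; move: hij; rewrite ej.
          case: (eqVneq i i0) => [->|ne]; first by rewrite ltxx.
          have : E i0 < E i.
            apply: hE; rewrite h0 lt0n; apply: contra ne => /eqP hk.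
            by apply/eqP/val_inj; rewrite /= hk.
          by move=> h1 h2; have := lt_trans h1 h2; rewrite ltxx.
        rewrite [delta_mx _ _ j j]mxE (negbTE hj) andbF.
        by apply: psd_diag; apply: psd_delta.
    case=> tau [ht hPt].
    have h1 : \sum_k tau k k * (1 - a k) = 0.
      under eq_bigr do rewrite mulrBr mulr1.
      rewrite sumrB -key // hPt tsum // mxE !eqxx.
      by rewrite subrr.
    have h3 : tau i0 i0 * (1 - a i0) = 0.
      apply: (psumr_eq0P _ h1) => // k _; apply: mulr_ge0; first exact: tge.
      by rewrite subr_ge0; case: (ha k).
    move: h3 => /eqP; rewrite mulf_eq0 (negbTE (tpos _ ht)) /= subr_eq0.
    by rewrite eq_sym (negbTE ha0).
split; first by exists sigma.
exists sigma; split => // hPs; apply: hn; by exists sigma.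
Qed.
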